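(* In the setting described in the context, suppose $F$ is strongly convex with respect to $\|\cdot\|_L$ with convexity parameter $\mu>0$. Then $$H(x,T(x))-F^*\leq\gamma_\mu(F(x)-F^* )\qquad\text{for all }x\in\mathrm{dom}\,F,$$ where $\gamma_\mu=1-\frac{\mu}{4}$ if $\mu\leq2$ and $\gamma_\mu=\frac1\mu$ otherwise.
   Context: Let $U\in\mathbf{R}^{N\times N}$ be a column permutation of the $N\times N$ identity matrix, partitioned as $U=[U_1,\dots,U_n]$ with $U_i\in\mathbf{R}^{N\times N_i}$, $\sum_iN_i=N$. For $x\in\mathbf{R}^N$ write $x^{(i)}=U_i^Tx$. Each $\mathbf{R}^{N_i}$ carries the norm $\|t\|_{(i)}=\langle B_it,t\rangle^{1/2}$ and dual norm $\|t\|_{(i)}^*=\langle B_i^{-1}t,t\rangle^{1/2}$ with $B_i$ positive definite. Consider minimizing $F(x)=f(x)+\Psi(x)$ over $\mathbf{R}^N$, where $f$ is convex and differentiable with $\|\nabla_if(x+U_it)-\nabla_if(x)\|_{(i)}^*\leq L_i\|t\|_{(i)}$ for all $x,t,i$ (constants $L_i>0$, $\nabla_if(x)=U_i^T\nabla f(x)$), and $\Psi(x)=\sum_i\Psi_i(x^{(i)})$ with each $\Psi_i$ proper closed convex. The problem has a minimizer; $F^*$ is the optimal value. Let $\|x\|_L=(\sum_iL_i\|x^{(i)}\|_{(i)}^2)^{1/2}$. $F$ is strongly convex w.r.t. a norm $\|\cdot\|$ with parameter $\mu>0$ if $F(x)\geq F(y)+\langle F'(y),x-y\rangle+\frac\mu2\|x-y\|^2$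 for all $x,y\in\mathrm{dom}\,F$ and every subgradient $F'(y)$ of $F$ at $y$. Define $T^{(i)}(x)=\arg\min_{t\in\mathbf{R}^{N_i}}\{\langle\nabla_if(x),t\rangle+\frac{L_i}{2}\|t\|_{(i)}^2+\Psi_i(x^{(i)}+t)\}$, $T(x)=\sum_iU_iT^{(i)}(x)$, and $H(x,T)=f(x)+\langle\nabla f(x),T\rangle+\frac12\|T\|_L^2+\Psi(x+T)$. *)

(* Defs.v *)
From HB Require Import structures.
From mathcomp Require Import all_boot all_order all_algebra.
From mathcomp Require Import all_classical all_reals all_analysis.
Set Implicit Arguments. Unset Strict Implicit. Unset Printing Implicit Defensive.
Import Order.TTheory GRing.Theory Num.Theory.
Import numFieldNormedType.Exports.
Local Open Scope ring_scope.
Local Open Scope classical_set_scope.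

Section Defs.
Variable R : realType.

Definition dotv (k : nat) (u v : 'cV[R]_k) : R := \sum_(j < k) u j 0 * v j 0.

Definition posdef (k : nat) (B : 'M[R]_k) : Prop :=
  B^T = B /\ forall t : 'cV[R]_k, t != 0 -> 0 < dotv (B *m t) t.

Definition blk_norm (k : nat) (B : 'M[R]_k) (t : 'cV[R]_k) : R :=
  Num.sqrt (dotv (B *m t) t).
Definition blk_dnorm (k : nat) (B : 'M[R]_k) (t : 'cV[R]_k) : R :=
  Num.sqrt (dotv (invmx B *m t) t).

Definition convex_fun (k : nat) (f : 'cV[R]_k -> R) : Prop :=
  forall (x y : 'cV[R]_k) (l : R), 0 <= l <= 1 ->
    f (l *: x + (1 - l) *: y) <= l * f x + (1 - l) * f y.

Definition proper_fun (k : nat) (P : 'cV[R]_k -> \bar R) : Prop :=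
  (forall t, P t != -oo%E) /\ exists t, (P t < +oo)%E.
Definition closed_fun (k : nat) (P : 'cV[R]_k -> \bar R) : Prop :=
  closed [set p : 'cV[R]_k * R | (P p.1 <= p.2%:E)%E].
Definition econvex_fun (k : nat) (P : 'cV[R]_k -> \bar R) : Prop :=
  forall (x y : 'cV[R]_k) (l : R), 0 < l < 1 ->
    (P (l *: x + (1 - l) *: y)%R <= l%:E * P x + (1 - l)%R%:E * P y)%E.
Definition proper_closed_convex (k : nat) (P : 'cV[R]_k -> \bar R) : Prop :=
  [/\ proper_fun P, closed_fun P & econvex_fun P].

Definition subgradient (k : nat) (F : 'cV[R]_k -> \bar R) (y g : 'cV[R]_k) : Prop :=
  forall z, (F y + (dotv g (z - y))%:E <= F z)%E.

Definition domF (k : nat) (F : 'cV[R]_k -> \bar R) : set 'cV[R]_k :=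
  [set x | (F x < +oo)%E].

Definition strongly_convex (k : nat) (F : 'cV[R]_k -> \bar R)
    (nrm : 'cV[R]_k -> R) (mu : R) : Prop :=
  forall x y, domF F x -> domF F y -> forall g, subgradient F y g ->
    (F y + (dotv g (x - y) + mu / 2 * nrm (x - y) ^+ 2)%:E <= F x)%E.

Variables (n : nat) (Ns : 'I_n -> nat).
Local Notation N := (\sum_(i < n) Ns i)%N.

Definition Ublk (U : 'M[R]_N) (i : 'I_n) : 'M[R]_(N, Ns i) := submxrow U i.
Definition xblk (U : 'M[R]_N) (i : 'I_n) (x : 'cV[R]_N) : 'cV[R]_(Ns i) :=
  (Ublk U i)^T *m x.
Definition normL (U : 'M[R]_N) (B : forall i, 'M[R]_(Ns i)) (L : 'I_n -> R)
    (x : 'cV[R]_N) : R :=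
  Num.sqrt (\sum_(i < n) L i * blk_norm (B i) (xblk U i x) ^+ 2).
Definition PsiF (U : 'M[R]_N) (Psi : forall i, 'cV[R]_(Ns i) -> \bar R)
    (x : 'cV[R]_N) : \bar R :=
  (\sum_(i < n) Psi i (xblk U i x))%E.
Definition FF (U : 'M[R]_N) (f : 'cV[R]_N -> R)
    (Psi : forall i, 'cV[R]_(Ns i) -> \bar R) (x : 'cV[R]_N) : \bar R :=
  ((f x)%:E + PsiF U Psi x)%E.
Definition Fstar (U : 'M[R]_N) (f : 'cV[R]_N -> R)
    (Psi : forall i, 'cV[R]_(Ns i) -> \bar R) : \bar R :=
  ereal_inf (range (FF U f Psi)).
Definition Tvec (U : 'M[R]_N) (Tb : forall i, 'cV[R]_(Ns i)) : 'cV[R]_N :=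
  \sum_(i < n) Ublk U i *m Tb i.
(* objective defining T^(i)(x), with grad = nabla f(x) *)
Definition blk_obj (U : 'M[R]_N) (B : forall i, 'M[R]_(Ns i)) (L : 'I_n -> R)
    (Psi : forall i, 'cV[R]_(Ns i) -> \bar R) (grad x : 'cV[R]_N) (i : 'I_n)
    (t : 'cV[R]_(Ns i)) : \bar R :=
  ((dotv (xblk U i grad) t + L i / 2 * blk_norm (B i) t ^+ 2)%:E
     + Psi i (xblk U i x + t)%R)%E.
Definition HH (U : 'M[R]_N) (B : forall i, 'M[R]_(Ns i)) (L : 'I_n -> R)
    (f : 'cV[R]_N -> R) (Psi : forall i, 'cV[R]_(Ns i) -> \bar R)
    (grad x T : 'cV[R]_N) : \bar R :=
  ((f x + dotv grad T + 1 / 2 * normL U B L T ^+ 2)%:E + PsiF U Psi (x + T)%R)%E.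

End Defs.

Definition gamma_mu (R : realType) (mu : R) : R :=
  if mu <= 2 then 1 - mu / 4 else 1 / mu.

(* Main.v *)
Require Import Defs.
From HB Require Import structures.
From mathcomp Require Import all_boot all_order all_algebra.
From mathcomp Require Import all_classical all_reals all_analysis.
From mathcomp Require Import ring lra.
From mathcomp Require Import fingroup perm.
Import Order.TTheory GRing.Theory Num.Theory.
Import numFieldNormedType.Exports.
Local Open Scope ring_scope.
Local Open Scope classical_set_scope.

Lemma dotvE (R : realType) k (u v : 'cV[R]_k) : dotv u v = (u^T *m v) 0 0.
Proof. by rewrite /dotv !mxE; apply: eq_bigr => j _; rewrite !mxE. Qed.

Lemma dotv_mull (R : realType) k m (u : 'cV[R]_k) (A : 'M[R]_(k, m)) v :
  dotv u (A *m v) = dotv (A^T *m u) v.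
Proof. by rewrite !dotvE trmx_mul trmxK mulmxA. Qed.

Lemma dotv_sumr (R : realType) k (I : finType) (u : 'cV[R]_k) (F : I -> 'cV[R]_k) :
  dotv u (\sum_i F i) = \sum_i dotv u (F i).
Proof.
rewrite !dotvE mulmx_sumr summxE; apply: eq_bigr => i _; by rewrite dotvE.
Qed.

Lemma dotvDr (R : realType) k (u v w : 'cV[R]_k) : dotv u (v + w) = dotv u v + dotv u w.
Proof. by rewrite !dotvE mulmxDr mxE. Qed.
Lemma dotvDl (R : realType) k (u v w : 'cV[R]_k) : dotv (v + w) u = dotv v u + dotv w u.
Proof. by rewrite !dotvE linearD /= mulmxDl mxE. Qed.
Lemma dotvZr (R : realType) k a (u v : 'cV[R]_k) : dotv u (a *: v) = a * dotv u v.
Proof. by rewrite !dotvE -scalemxAr mxE. Qed.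
Lemma dotvZl (R : realType) k a (u v : 'cV[R]_k) : dotv (a *: u) v = a * dotv u v.
Proof. by rewrite !dotvE linearZ /= -scalemxAl mxE. Qed.

Lemma xblk_Tvec (R : realType) n (Ns : 'I_n -> nat) (U : 'M[R]_(\sum_(i < n) Ns i))
  (HU : U^T *m U = 1%:M) (T : forall i, 'cV[R]_(Ns i)) i :
  xblk U i (Tvec U T) = T i.
Proof.
rewrite /xblk /Tvec /Ublk -mul_mxrow_mxcol submxrowK tr_submxrow submxcol_mul.
by rewrite mulmxA HU mul1mx mxcolK.
Qed.

Lemma dotv_split (R : realType) n (Ns : 'I_n -> nat) (U : 'M[R]_(\sum_(i < n) Ns i))
  (HU : U *m U^T = 1%:M) g d :
  dotv g d = \sum_i dotv (xblk U i g) (xblk U i d).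
Proof.
rewrite {1}(_ : d = \sum_i Ublk U i *m xblk U i d).
  rewrite dotv_sumr; apply: eq_bigr => i _; by rewrite dotv_mull.
rewrite /xblk /Ublk -mul_mxrow_mxcol submxrowK.
have E : \mxcol_j ((submxrow U j)^T *m d) = \mxcol_j (submxcol (U^T *m d) j).
  by apply: eq_mxcol => j; rewrite tr_submxrow submxcol_mul.
by rewrite E submxcolK mulmxA HU mul1mx.
Qed.

Lemma perm_orth (R : realType) k (U : 'M[R]_k) : is_perm_mx U ->
  U^T *m U = 1%:M /\ U *m U^T = 1%:M.
Proof.
case/is_perm_mxP => s ->; rewrite tr_perm_mx; split.
  by rewrite -perm_mxM (fingroup.mulVg s) perm_mx1.
by rewrite -perm_mxM (fingroup.mulgV s) perm_mx1.
Qed.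

Lemma dotv0l (R : realType) k (v : 'cV[R]_k) : dotv 0 v = 0.
Proof. by rewrite dotvE trmx0 mul0mx mxE. Qed.

Lemma blk_normZ (R : realType) k (B : 'M[R]_k) a t :
  blk_norm B (a *: t) ^+ 2 = a ^+ 2 * blk_norm B t ^+ 2.
Proof.
rewrite /blk_norm -scalemxAr dotvZl dotvZr mulrA -expr2 sqrtrM ?sqr_ge0 //.
by rewrite sqrtr_sqr exprMn real_normK ?num_real.
Qed.

Lemma blk_normN (R : realType) k (B : 'M[R]_k) t :
  blk_norm B (- t) ^+ 2 = blk_norm B t ^+ 2.
Proof. by rewrite -scaleN1r blk_normZ sqrrN expr1n mul1r. Qed.

Lemma xblkD (R : realType) n (Ns : 'I_n -> nat) (U : 'M[R]_(\sum_(i < n) Ns i)) i u v :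
  xblk U i (u + v) = xblk U i u + xblk U i v.
Proof. by rewrite /xblk mulmxDr. Qed.
Lemma xblkB (R : realType) n (Ns : 'I_n -> nat) (U : 'M[R]_(\sum_(i < n) Ns i)) i u v :
  xblk U i (u - v) = xblk U i u - xblk U i v.
Proof. by rewrite /xblk mulmxBr. Qed.
Lemma xblkZ (R : realType) n (Ns : 'I_n -> nat) (U : 'M[R]_(\sum_(i < n) Ns i)) i a u :
  xblk U i (a *: u) = a *: xblk U i u.
Proof. by rewrite /xblk scalemxAr. Qed.

Lemma normL2 (R : realType) n (Ns : 'I_n -> nat) (U : 'M[R]_(\sum_(i < n) Ns i))
  (B : forall i, 'M[R]_(Ns i)) (L : 'I_n -> R) (HL : forall i, 0 < L i) v :
  normL U B L v ^+ 2 = \sum_i L i * blk_norm (B i) (xblk U i v) ^+ 2.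
Proof.
rewrite /normL sqr_sqrtr //; apply: sumr_ge0 => i _.
by rewrite mulr_ge0 ?sqr_ge0 // ltW.
Qed.

Lemma psi_fin (R : realType) (I : finType) (P : I -> \bar R) (c : R) :
  (forall i, (P i != -oo)%E) -> (c%:E + \sum_i P i < +oo)%E ->
  forall i, P i \is a fin_num.
Proof.
move=> Hn Hs i; rewrite fin_numE Hn /=; apply/negP => /eqP Pi.
have : (\sum_i P i = +oo)%E.
  by apply/esum_eqyP => [j _|]; [exact: Hn | exists i; rewrite mem_index_enum].
by move=> E; move: Hs; rewrite E addey.
Qed.
Lemma grad_ineq (R : realType) (k : nat) (f : 'cV[R]_k -> R) (g x d : 'cV[R]_k)
  (Hd : differentiable f x) (Hg : 'd f x d = dotv g d) (Hc : convex_fun f) :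
  f x + dotv g d <= f (x + d).
Proof.
rewrite -Hg -deriveE //.
rewrite -lerBrDl.
apply: limr_le; first exact: diff_derivable.
near=> h.
have hn0 : h != 0 by near: h; exact: nbhs_dnbhs_neq.
have h1 : h < 1.
  near: h; apply: nbhs_dnbhs; exact: lt_nbhsl.
rewrite /= [h *: d + x]addrC.
have [hp|hn] := ltrP 0 h.
- have := Hc (x + d) x h. rewrite (ltW hp) (ltW h1) => /(_ isT).
  have -> : h *: (x + d) + (1 - h) *: x = x + h *: d.
    by apply/matrixP => i j; rewrite !mxE; ring.
  move=> H. rewrite -[_ *: _]/(h^-1 * (f (x + h *: d) - f x)) mulrC ler_pdivrMr //. lra.
- have hlt : h < 0 by rewrite lt_neqAle hn0 hn.
  set l := (1 - h)^-1.
  have hl0 : 0 < 1 - h by lra.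
  have l0 : 0 <= l by rewrite invr_ge0 ltW.
  have l1 : l <= 1 by rewrite invf_le1 //; lra.
  have := Hc (x + h *: d) (x + d) l. rewrite l0 l1 => /(_ isT).
  have -> : l *: (x + h *: d) + (1 - l) *: (x + d) = x.
    have e : l * h + (1 - l) = 0 by rewrite /l; field; lra.
    apply/matrixP => i j; rewrite !mxE.
    transitivity (x i j + (l * h + (1 - l)) * d i j); first ring.
    by rewrite e mul0r addr0.
  move=> H.
  have H2 : (1 - h) * f x <= f (x + h *: d) - h * f (x + d).
    have := ler_wpM2l (ltW hl0) H. rewrite mulrDr mulrA /l divff ?mul1r; last lra.
    have -> : (1 - h) * ((1 - (1 - h)^-1) * f (x + d)) = - h * f (x + d).
      by field; lra.
    lra.
  rewrite -[_ *: _]/(h^-1 * (f (x + h *: d) - f x)) mulrC ler_ndivrMr //. lra.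
Unshelve. all: by end_near.
Qed.

Arguments perm_orth {R k U}.
Arguments psi_fin {R I P c}.
Arguments normL2 {R n Ns U B L}.
Arguments dotv_split {R n Ns U}.
Arguments xblk_Tvec {R n Ns U}.
Arguments grad_ineq {R k f g x d}.

Theorem lemma5 (R : realType) (n : nat) (Ns : 'I_n -> nat)
  (U : 'M[R]_(\sum_(i < n) Ns i)) (HU : is_perm_mx U)
  (B : forall i : 'I_n, 'M[R]_(Ns i)) (HB : forall i, posdef (B i))
  (L : 'I_n -> R) (HL : forall i, 0 < L i)
  (f : 'cV[R]_(\sum_(i < n) Ns i) -> R)
  (gradf : 'cV[R]_(\sum_(i < n) Ns i) -> 'cV[R]_(\sum_(i < n) Ns i))
  (Hdiff : forall x, differentiable f x /\ forall h, 'd f x h = dotv (gradf x) h)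
  (Hfconv : convex_fun f)
  (HLip : forall x i (t : 'cV[R]_(Ns i)),
     blk_dnorm (B i) (xblk U i (gradf (x + Ublk U i *m t)) - xblk U i (gradf x))
       <= L i * blk_norm (B i) t)
  (Psi : forall i : 'I_n, 'cV[R]_(Ns i) -> \bar R)
  (HPsi : forall i, proper_closed_convex (Psi i))
  (Hmin : exists xs, forall x, (FF U f Psi xs <= FF U f Psi x)%E)
  (mu : R) (Hmu : 0 < mu)
  (Hsc : strongly_convex (FF U f Psi) (normL U B L) mu) :
  forall x, domF (FF U f Psi) x ->
  forall Tx : forall i : 'I_n, 'cV[R]_(Ns i),
    (forall i (t : 'cV[R]_(Ns i)),
       (blk_obj U B L Psi (gradf x) x (Tx i) <= blk_obj U B L Psi (gradf x) x t)%E) ->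
  (HH U B L f Psi (gradf x) x (Tvec U Tx) - Fstar U f Psi
     <= (gamma_mu mu)%:E * (FF U f Psi x - Fstar U f Psi))%E.
Proof.
move=> x domx Tx HT.
have [HUU HUt] := perm_orth HU.
case: Hmin => xs Hxs.
set g := gradf x.
have Fstar_eq : Fstar U f Psi = FF U f Psi xs.
  apply/eqP; rewrite eq_le; apply/andP; split.
    by apply: ge_ereal_inf; exists (FF U f Psi xs) => //; exists xs.
  by apply: le_ereal_inf_tmp => _ [y _ <-]; exact: Hxs.
have noninf i t : (Psi i t != -oo)%E by case: (HPsi i) => -[+ _] _ _; apply.
have domxs : domF (FF U f Psi) xs by exact: (le_lt_trans (Hxs x) domx).
have finx := psi_fin (fun i => noninf i (xblk U i x)) domx.
have finxs := psi_fin (fun i => noninf i (xblk U i xs)) domxs.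
set a := fun i => fine (Psi i (xblk U i x)).
set b := fun i => fine (Psi i (xblk U i xs)).
have Ea i : Psi i (xblk U i x) = (a i)%:E by rewrite /a fineK.
have Eb i : Psi i (xblk U i xs) = (b i)%:E by rewrite /b fineK.
set Fx := f x + \sum_i a i.
set Fs := f xs + \sum_i b i.
have FFx : FF U f Psi x = Fx%:E.
  by rewrite /FF /PsiF (eq_bigr _ (fun i _ => Ea i)) sumEFin -EFinD.
have FFxs : FF U f Psi xs = Fs%:E.
  by rewrite /FF /PsiF (eq_bigr _ (fun i _ => Eb i)) sumEFin -EFinD.
set S := \sum_i L i * blk_norm (B i) (xblk U i (xs - x)) ^+ 2.
have HS : Fs + mu / 2 * S <= Fx.
  have sg : subgradient (FF U f Psi) xs 0.
    by move=> z; rewrite dotv0l adde0; exact: Hxs.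
  have := Hsc x xs domx domxs 0 sg.
  rewrite FFx FFxs dotv0l add0r -EFinD lee_fin normL2 //.
  suff -> : \sum_i L i * blk_norm (B i) (xblk U i (x - xs)) ^+ 2 = S by [].
  by apply: eq_bigr => i _; rewrite -opprB {1}/xblk mulmxN blk_normN.
set al := if mu <= 2 then mu / 2 else 1.
have [al0 al1] : 0 < al /\ al <= 1.
  rewrite /al; case: ifP => h; split => //; first by rewrite divr_gt0.
  by rewrite ler_pdivrMr //; lra.
set d := al *: (xs - x).
have Hdi i : xblk U i d = al *: (xblk U i xs - xblk U i x) by rewrite xblkZ xblkB.
have Hdec : HH U B L f Psi g x (Tvec U Tx) =
    ((f x)%:E + \sum_i blk_obj U B L Psi g x (Tx i))%E.
  rewrite /HH /blk_obj /PsiF (dotv_split HUt) normL2 //.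
  have e1 : \sum_i dotv (xblk U i g) (xblk U i (Tvec U Tx)) =
            \sum_i dotv (xblk U i g) (Tx i).
    by apply: eq_bigr => i _; rewrite xblk_Tvec.
  have e2 : \sum_i L i * blk_norm (B i) (xblk U i (Tvec U Tx)) ^+ 2 =
            \sum_i L i * blk_norm (B i) (Tx i) ^+ 2.
    by apply: eq_bigr => i _; rewrite xblk_Tvec.
  have e3 : (\sum_i Psi i (xblk U i (x + Tvec U Tx)) =
            \sum_i Psi i (xblk U i x + Tx i)%R)%E.
    by apply: eq_bigr => i _; rewrite xblkD xblk_Tvec.
  rewrite e1 e2 e3 big_split /= sumEFin addeA -EFinD.
  congr (_ + _)%E; congr (_%:E).
  rewrite big_split /= mulr_sumr -addrA; congr (_ + _); congr (_ + _).
  by apply: eq_bigr => i _; ring.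
have Hpsi i : (Psi i (xblk U i x + xblk U i d)%R <= (al * b i + (1 - al) * a i)%:E)%E.
  rewrite Hdi.
  have [al1'|al1'] := eqVneq al 1.
    by rewrite al1' scale1r addrC subrK Eb subrr mul0r addr0 mul1r.
  have h : 0 < al < 1 by rewrite al0 lt_neqAle al1' al1.
  case: (HPsi i) => _ _ Hc.
  have := Hc (xblk U i xs) (xblk U i x) al h.
  rewrite Eb Ea -!EFinM -EFinD.
  suff -> : al *: xblk U i xs + (1 - al) *: xblk U i x =
            xblk U i x + al *: (xblk U i xs - xblk U i x) by [].
  by apply/matrixP => p q; rewrite !mxE; ring.
have H1 : (HH U B L f Psi g x (Tvec U Tx) <=
           (f x)%:E + \sum_i blk_obj U B L Psi g x (xblk U i d))%E.
  by rewrite Hdec; apply: leeD2l; apply: lee_sum => i _; exact: HT.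
have H2 : (\sum_i blk_obj U B L Psi g x (xblk U i d) <=
   (\sum_i (dotv (xblk U i g) (xblk U i d) + L i / 2 * blk_norm (B i) (xblk U i d) ^+ 2
            + (al * b i + (1 - al) * a i)))%:E)%E.
  rewrite -sumEFin; apply: lee_sum => i _; rewrite /blk_obj (EFinD (_ + _)); apply: leeD2l.
  exact: Hpsi.
have S0 : 0 <= S.
  by apply: sumr_ge0 => i _; rewrite mulr_ge0 ?sqr_ge0 // ltW.
have G := grad_ineq (Hdiff x).1 ((Hdiff x).2 d) Hfconv.
have C : f (x + d) <= al * f xs + (1 - al) * f x.
  have := Hfconv xs x al; rewrite (ltW al0) al1 => /(_ isT).
  suff -> : al *: xs + (1 - al) *: x = x + d by [].
  by apply/matrixP => p q; rewrite !mxE; ring.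
have H3 : f x + \sum_i (dotv (xblk U i g) (xblk U i d) + L i / 2 * blk_norm (B i) (xblk U i d) ^+ 2
            + (al * b i + (1 - al) * a i)) <= Fs + gamma_mu mu * (Fx - Fs).
  rewrite !big_split /= -(dotv_split HUt).
  have -> : \sum_i L i / 2 * blk_norm (B i) (xblk U i d) ^+ 2 = al ^+ 2 / 2 * S.
    rewrite /S mulr_sumr; apply: eq_bigr => i _.
    by rewrite /d xblkZ blk_normZ; ring.
  rewrite -!mulr_sumr.
  move: HS G C; rewrite /Fs /Fx /gamma_mu /al.
  set Sa := \sum_i a i; set Sb := \sum_i b i.
  case: ifP => hm HS G C.
    have : mu / 4 * (mu / 2 * S) <= mu / 4 * (f x + Sa - (f xs + Sb)).
      by apply: ler_wpM2l; [rewrite divr_ge0 // ltW | lra].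
    lra.
  have : 1 / 2 * S <= (f x + Sa - (f xs + Sb)) / mu.
    by rewrite ler_pdivlMr //; nra.
  lra.
rewrite Fstar_eq FFx FFxs -EFinB -EFinM leeBlDr // -EFinD.
apply: le_trans H1 _; apply: le_trans (leeD2l _ H2) _.
rewrite -EFinD lee_fin; lra.
Qed.
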